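(* Let $k=k(n)$, $m=m(n)$ be positive integers and suppose there is $\xi=\xi(n)\in(0,1/2)$ with $$\exp[-\xi^2 n]=o\big((1-2^{-k})^m\big)\qquad\text{and}\qquad \Big(\frac{1+2\xi}{4}\Big)^k=o(1/m).$$ Let $f=\bigwedge_{i=1}^m C_i$ where $C_1,\dots,C_m$ are independent uniformly random $k$-clauses on $x_1,\dots,x_n$. Then for every fixed $\zeta>0$, $$\Pr\Big(\big|\mu(f)-(1-2^{-k})^m\big|>\zeta(1-2^{-k})^m\Big)\to 0\quad(n\to\infty).$$
   Context: $\mu$ is the uniform probability measure on $\{0,1\}^n$ and $\mu(f)=\mu(\{x: f(x)=1\})$. A uniformly random $k$-clause on $x_1,\dots,x_n$ is obtained by choosing a $k$-subset $K\subseteq[n]$ uniformly at random and a vector $g\in\{0,1\}^K$ uniformly at random; the clause is the Boolean function $C(x)=1$ iff $x_j=g_j$ for some $j\in K$. *)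

(* Defs.v *)
From mathcomp Require Import all_boot.
From Stdlib Require Import Reals.

Set Implicit Arguments.
Unset Strict Implicit.
Unset Printing Implicit Defensive.

(* A k-clause on x_1..x_n, encoded as (K, g) with K a subset of 'I_n and
   g : {0,1}^n vanishing outside K; valid clauses (#|K| = k) are in bijection
   with pairs (K k-subset, g in {0,1}^K), so uniform over valid encodings is
   exactly the uniform random k-clause. *)
Definition clause_t (n : nat) := ({set 'I_n} * {ffun 'I_n -> bool})%type.

Definition valid_clause (n k : nat) (c : clause_t n) : bool :=
  (#|c.1| == k) && [forall i, (i \notin c.1) ==> ~~ c.2 i].

Definition eval_clause (n : nat) (c : clause_t n) (x : {ffun 'I_n -> bool}) : bool :=
  [exists j in c.1, x j == c.2 j].

Definition formula_t (n m : nat) := {ffun 'I_m -> clause_t n}.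

Definition valid_formula (n k m : nat) (F : formula_t n m) : bool :=
  [forall i, valid_clause k (F i)].

Definition eval_formula (n m : nat) (F : formula_t n m) (x : {ffun 'I_n -> bool}) : bool :=
  [forall i, eval_clause (F i) x].

Definition mu (n m : nat) (F : formula_t n m) : R :=
  (INR #|[set x | eval_formula F x]| / 2 ^ n)%R.

(* probability of an event when C_1..C_m are independent uniform k-clauses,
   i.e. uniform over valid m-tuples of clause encodings *)
Definition prob (n k m : nat) (E : formula_t n m -> bool) : R :=
  (INR #|[set F : formula_t n m | valid_formula k F && E F]| / INR #|[set F : formula_t n m | valid_formula k F]|)%R.

Definition little_o (a b : nat -> R) : Prop :=
  forall eps : R, (0 < eps)%R -> exists N : nat, forall n : nat, (N <= n)%nat ->
    (Rabs (a n) <= eps * Rabs (b n))%R.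

Definition dev_event (n m : nat) (p zeta : R) (F : formula_t n m) : bool :=
  if Rlt_dec (zeta * p) (Rabs (mu F - p)) then true else false.

Arguments prob : clear implicits.
Arguments dev_event : clear implicits.

(* Main.v *)
Require Import Defs.
From Stdlib Require Import Reals Lra Psatz.
Ltac slra := lra.
Ltac snra := nra.
From mathcomp Require Import all_boot all_order all_algebra.
From mathcomp Require Import Rstruct.
From mathcomp Require Import ring lra.
Import Order.TTheory GRing.Theory Num.Theory.
Set Implicit Arguments.
Unset Strict Implicit.
Unset Printing Implicit Defensive.
Lemma card_sub_sum (T : finType) (A : {set T}) (P : pred T) :
  #|[set c in A | P c]| = (\sum_(c in A) (P c : nat))%N.
Proof.
rewrite -sum1_card big_mkcond [RHS]big_mkcond /=; apply: eq_bigr => c _.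
by rewrite !inE; case: (c \in A); case: (P c).
Qed.

Lemma card_ffun_forall (n m : nat) (P : pred (clause_t n)) :
  #|[set F : formula_t n m | [forall i, P (F i)]]| = (#|[set c | P c]| ^ m)%N.
Proof.
have := @card_ffun_on 'I_m _ [set c | P c]; rewrite card_ord => <-.
apply: eq_card => F; rewrite inE.
apply/forallP/ffun_onP => H i; first by rewrite inE; exact: H.
by have := H i; rewrite inE.
Qed.

Section Comb.
Variables n k : nat.
Local Notation B := {ffun 'I_n -> bool}.
Definition V := [set c : clause_t n | valid_clause k c].

Lemma card_supp (K : {set 'I_n}) :
  #|[set g : B | [forall i, (i \notin K) ==> ~~ g i]]| = (2 ^ #|K|)%N.
Proof.
rewrite -card_powerset.
set D := [set g : B | _].
have inj : injective (fun g : B => [set i | g i]).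
  move=> g1 g2 h; apply/ffunP => i.
  by have := congr1 (fun A : {set 'I_n} => i \in A) h; rewrite !inE.
rewrite -(card_in_imset (f := fun g : B => [set i | g i]) (D := D)); last first.
  by move=> ? ? _ _; apply: inj.
apply: eq_card => A; rewrite [in RHS]inE; apply/imsetP/idP.
  case=> g; rewrite inE => /forallP Hg ->; apply/subsetP => i; rewrite inE => gi.
  by move: (Hg i); rewrite gi implybF negbK.
move=> sAK; exists [ffun i => i \in A]; last by apply/setP => i; rewrite !inE ffunE.
rewrite inE; apply/forallP => i; apply/implyP; rewrite ffunE; apply: contra.
exact: (subsetP sAK).
Qed.

Lemma cardV : #|V| = ('C(n, k) * 2 ^ k)%N.
Proof.
rewrite -sum1_card big_mkcond /=.
transitivity (\sum_(K : {set 'I_n}) \sum_(g : B) ((#|K| == k) && [forall i, (i \notin K) ==> ~~ g i]) : nat)%N.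
  rewrite pair_big /=; apply: eq_bigr => -[K g] _; rewrite inE /valid_clause /=.
  by case: (_ && _).
transitivity (\sum_(K : {set 'I_n}) (#|K| == k) * 2 ^ k)%N.
  apply: eq_bigr => K _; case: eqP => [<-|_].
    rewrite mul1n -card_supp -sum1_card big_mkcond /=.
    rewrite [RHS]big_mkcond /=.
    by apply: eq_bigr => g _; rewrite inE; case: [forall _, _].
  by rewrite mul0n big1.
rewrite -big_distrl /=.
have <- : #|[set A : {set 'I_n} | #|A| == k]| = (\sum_(K : {set 'I_n}) (#|K| == k))%N.
  rewrite -sum1_card big_mkcond /=.
  by apply: eq_bigr => K _; rewrite inE; case: (_ == _).
by rewrite card_draws card_ord.
Qed.
End Comb.
Section Comb2.
Variables n k : nat.
Local Notation B := {ffun 'I_n -> bool}.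
Local Notation V := (V n k).

Lemma inV (c : clause_t n) : (c \in V) = valid_clause k c.
Proof. by rewrite inE. Qed.

Definition gK (K : {set 'I_n}) (x : B) : B := [ffun j => (j \in K) && ~~ x j].

Lemma unsat_char (c : clause_t n) (x : B) :
  valid_clause k c && ~~ eval_clause c x = (#|c.1| == k) && (c.2 == gK c.1 x).
Proof.
case: c => K g /=; rewrite /valid_clause /eval_clause /=.
apply/idP/idP.
  case/andP => /andP[-> /forallP hg] hx /=; apply/eqP/ffunP => j; rewrite ffunE.
  case jK: (j \in K) => /=.
    apply/eqP; apply: contraNT hx => hne; apply/existsP; exists j; rewrite jK /=.
    by move: hne; case: (x j); case: (g j).
  by have := hg j; rewrite jK /= => /negbTE.
case/andP => -> /eqP -> /=; apply/andP; split.
  by apply/forallP => j; apply/implyP; rewrite ffunE => /negbTE ->.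
by apply/existsP => -[j /andP[jK]]; rewrite ffunE jK /=; case: (x j).
Qed.

Lemma card_unsat (x : B) : #|[set c in V | ~~ eval_clause c x]| = 'C(n, k).
Proof.
have -> : [set c in V | ~~ eval_clause c x] =
          (fun K => (K, gK K x)) @: [set K : {set 'I_n} | #|K| == k].
  apply/setP => c; rewrite !in_set; rewrite unsat_char; apply/idP/imsetP.
    case/andP => hk /eqP hg; exists c.1; first by rewrite inE.
    by case: c hg hk => /= ? ? ->.
  by case=> K; rewrite inE => hk ->; rewrite /= hk eqxx.
rewrite card_in_imset; first by rewrite card_draws card_ord.
by move=> K1 K2 _ _ [].
Qed.

Lemma card_unsat2 (x y : B) :
  #|[set c in V | ~~ eval_clause c x && ~~ eval_clause c y]|
    <= 'C(#|[set i | x i == y i]|, k).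
Proof.
rewrite -cards_draws.
set U := [set c in V | _].
rewrite -(card_in_imset (f := fst) (D := U)); last first.
  move=> c1 c2; rewrite !in_set => /andP[v1 /andP[u1 _]] /andP[v2 /andP[u2 _]] e.
  have := unsat_char c1 x; rewrite v1 u1 /= => /esym /andP[_ /eqP h1].
  have := unsat_char c2 x; rewrite v2 u2 /= => /esym /andP[_ /eqP h2].
  clear v1 v2 u1 u2; by case: c1 c2 e h1 h2 => K1 g1 [K2 g2] /= -> -> ->.
apply: subset_leq_card; apply/subsetP => K /imsetP[c]; rewrite in_set.
case/andP => vc /andP[ux uy] ->; move: vc; rewrite ?inV => vc; rewrite inE; apply/andP; split; last first.
  by have := unsat_char c x; rewrite vc ux /= => /esym /andP[].
have := unsat_char c x; rewrite vc ux /= => /esym /andP[_ /eqP hx].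
have := unsat_char c y; rewrite vc uy /= => /esym /andP[_ /eqP hy].
apply/subsetP => j jK; rewrite inE.
have := congr1 (fun g : B => g j) (etrans (esym hx) hy).
by rewrite /= !ffunE jK /=; case: (x j); case: (y j).
Qed.

Lemma sat2_id (x y : B) :
  (#|[set c in V | eval_clause c x && eval_clause c y]|
   + #|[set c in V | ~~ eval_clause c x]| + #|[set c in V | ~~ eval_clause c y]|
  = #|V| + #|[set c in V | ~~ eval_clause c x && ~~ eval_clause c y]|)%N.
Proof.
rewrite !card_sub_sum -sum1_card -!big_split /=; apply: eq_bigr => c _.
by case: (eval_clause c x); case: (eval_clause c y).
Qed.
End Comb2.
Lemma card_pred_sum (T : finType) (P : pred T) :
  #|[set x | P x]| = (\sum_x (P x : nat))%N.
Proof.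
rewrite -sum1_card big_mkcond /=; apply: eq_bigr => c _.
by rewrite inE; case: (P c).
Qed.

Section Forms.
Variables n k m : nat.
Local Notation B := {ffun 'I_n -> bool}.
Local Notation V := (V n k).

Definition sF (F : formula_t n m) := #|[set x : B | eval_formula F x]|.
Definition Sf := [set F : formula_t n m | valid_formula k F].

Lemma cardS : #|Sf| = (#|V| ^ m)%N.
Proof. exact: card_ffun_forall. Qed.

Lemma sum_forall (Q : pred (clause_t n)) :
  (\sum_(F in Sf) ([forall i, Q (F i)] : nat))%N = (#|[set c in V | Q c]| ^ m)%N.
Proof.
rewrite -card_sub_sum.
have -> : #|[set c in V | Q c]| = #|[set c | valid_clause k c && Q c]|.
  by apply: eq_card => c; rewrite !inE.
rewrite -card_ffun_forall; apply: eq_card => F; rewrite !inE /valid_formula.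
apply/andP/forallP.
  by case=> /forallP h1 /forallP h2 i; rewrite h1 h2.
by move=> h; split; apply/forallP => i; case/andP: (h i).
Qed.

Lemma sum_sF :
  (\sum_(F in Sf) sF F)%N = (\sum_(x : B) #|[set c in V | eval_clause c x]| ^ m)%N.
Proof.
rewrite /sF; under eq_bigr do rewrite card_pred_sum.
rewrite exchange_big /=; apply: eq_bigr => x _.
by rewrite -sum_forall.
Qed.

Lemma sum_sF2 :
  (\sum_(F in Sf) sF F * sF F)%N =
  (\sum_(x : B) \sum_(y : B)
      #|[set c in V | eval_clause c x && eval_clause c y]| ^ m)%N.
Proof.
rewrite /sF; under eq_bigr do rewrite card_pred_sum big_distrlr /=.
rewrite exchange_big /=; apply: eq_bigr => x _.
rewrite exchange_big /=; apply: eq_bigr => y _.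
rewrite -sum_forall; apply: eq_bigr => F _.
rewrite mulnb; congr (nat_of_bool _).
rewrite /eval_formula; apply/andP/forallP.
  by case=> /forallP h1 /forallP h2 i; rewrite h1 h2.
by move=> h; split; apply/forallP => i; case/andP: (h i).
Qed.
End Forms.
Lemma ffact_ineq a n k : a <= n -> a ^_ k * n ^ k <= n ^_ k * a ^ k.
Proof.
move=> han; elim: k => [|k IH]; first by rewrite !ffactn0 !expn0.
rewrite !ffactnSr !expnS.
have h : (a - k) * n <= (n - k) * a.
  rewrite !mulnBl [n * a]mulnC; apply: leq_sub2l; exact: leq_mul.
have := leq_mul IH h.
by rewrite mulnACA [in X in _ <= X]mulnACA [n * _]mulnC [a * _]mulnC.
Qed.

Lemma bin_ineq a n k : a <= n -> 'C(a, k) * n ^ k <= 'C(n, k) * a ^ k.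
Proof.
move=> han; rewrite -(leq_pmul2r (fact_gt0 k)).
by rewrite mulnAC bin_ffact [X in _ <= X]mulnAC bin_ffact ffact_ineq.
Qed.

Local Open Scope ring_scope.

Definition ex (x : R) : R := exp x.
Arguments ex : clear scopes.

Lemma expge (x : R) : 1 + x <= ex x.
Proof. by apply/RleP; apply: exp_ineq1_le. Qed.

Lemma expgt0 (x : R) : 0 < ex x.
Proof. by apply/RltP; apply: exp_pos. Qed.

Lemma expD (x y : R) : ex (x + y) = ex x * ex y.
Proof. exact: exp_plus. Qed.

Lemma expNK (x : R) : ex x * ex (- x) = 1.
Proof. by rewrite -expD subrr; exact: exp_0. Qed.

Lemma exp_up (y : R) : y < 1 -> ex y * (1 - y) <= 1.
Proof.
move=> hy; rewrite -[X in _ <= X](expNK y); apply: ler_wpM2l; first exact/ltW/expgt0.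
exact: expge.
Qed.

Lemma cosh_bound (s : R) : 0 <= s <= 1/2 -> ex s + ex (- s) <= 2 * ex (s ^+ 2).
Proof.
case/andP => s0 s1.
set v := s / 2.
have hs : s = v + v by rewrite /v; field.
have hA : ex s = ex v ^+ 2 by rewrite hs expD expr2.
have hB : ex (- s) = ex (- v) ^+ 2 by rewrite hs opprD expD expr2.
have v0 : 0 <= v by rewrite /v; lra.
have v1 : v <= 1/4 by rewrite /v; lra.
have A1 : ex v * (1 - v) <= 1 by apply: exp_up; clearbody v; clear -v1; lra.
have B1 : ex (- v) * (1 + v) <= 1.
  have hv : - v < 1 by lra.
  by have := exp_up hv; rewrite opprK.
have A0 := expgt0 v; have B0 := expgt0 (- v).
have e2 := expge (s ^+ 2).
rewrite hA hB.
set A := ex v in A1 A0 *; set Bv := ex (- v) in B1 B0 *.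
have hA2 : A ^+ 2 * (1 - v) ^+ 2 <= 1.
  have a0 : 0 <= A * (1 - v) by apply: mulr_ge0; lra.
  rewrite -exprMn expr2; nra.
have hB2 : Bv ^+ 2 * (1 + v) ^+ 2 <= 1.
  have a0 : 0 <= Bv * (1 + v) by apply: mulr_ge0; lra.
  rewrite -exprMn expr2; nra.
have key : (A ^+ 2 + Bv ^+ 2) * ((1 - v) ^+ 2 * (1 + v) ^+ 2) <= (2 + 2 * s ^+ 2) * ((1 - v) ^+ 2 * (1 + v) ^+ 2).
  have p1 : A ^+ 2 * ((1 - v) ^+ 2 * (1 + v) ^+ 2) <= (1 + v) ^+ 2.
    rewrite mulrA; rewrite -[X in _ <= X]mul1r; apply: ler_wpM2r => //.
    exact: sqr_ge0.
  have p2 : Bv ^+ 2 * ((1 - v) ^+ 2 * (1 + v) ^+ 2) <= (1 - v) ^+ 2.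
    rewrite [(1 - v) ^+ 2 * _]mulrC mulrA; rewrite -[X in _ <= X]mul1r; apply: ler_wpM2r => //.
    exact: sqr_ge0.
  have poly : (1 + v) ^+ 2 + (1 - v) ^+ 2 <= (2 + 2 * s ^+ 2) * ((1 - v) ^+ 2 * (1 + v) ^+ 2).
    rewrite -subr_ge0.
    have -> : (2 + 2 * s ^+ 2) * ((1 - v) ^+ 2 * (1 + v) ^+ 2) - ((1 + v) ^+ 2 + (1 - v) ^+ 2)
       = 2 * (v * v) * (1 - 7 * (v * v) + 4 * ((v * v) * (v * v))) by rewrite hs; ring.
    have w0 : 0 <= v * v by nra.
    have w1 : v * v <= 1/16 by nra.
    have w2 : 0 <= (v * v) * (v * v) by nra.
    apply: mulr_ge0; first by lra.
    lra.
  lra.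
have pos : 0 < (1 - v) ^+ 2 * (1 + v) ^+ 2.
  by apply: mulr_gt0; apply: exprn_gt0; lra.
rewrite ler_pM2r // in key.
lra.
Qed.
Lemma exX (x : R) (n : nat) : ex x ^+ n = ex (x *+ n).
Proof.
elim: n => [|n IH]; first by rewrite expr0 mulr0n /ex exp_0.
by rewrite exprS IH -expD mulrS.
Qed.

Lemma exE (a b : R) : a = b -> ex a = ex b.
Proof. by move->. Qed.

Lemma ex_ge1 (x : R) : 0 <= x -> 1 <= ex x.
Proof. move=> h; have := expge x; lra. Qed.

Section Tail.
Variable n : nat.
Local Notation B := {ffun 'I_n -> bool}.

Lemma tail (x : B) (xi : R) : 0 < xi < 1/2 ->
  \sum_(y : B) (if (1/2 + xi) * n%:R < (#|[set i | x i == y i]|)%:R then 1 else 0)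
    <= 2 ^+ n * ex (- (xi ^+ 2)) ^+ n.
Proof.
case/andP => xi0 xi1.
set t := 2 * xi; set lam := ex t; set c := ex (- (t * (1/2 + xi))).
have lam0 : 0 < lam by apply: expgt0.
have c0 : 0 < c by apply: expgt0.
have step1 : forall y : B,
  (if (1/2 + xi) * n%:R < (#|[set i | x i == y i]|)%:R then 1 else 0)
     <= lam ^+ #|[set i | x i == y i]| * c ^+ n.
  move=> y; set a := #|_|.
  have -> : lam ^+ a * c ^+ n = ex (t * (a%:R - (1/2 + xi) * n%:R)).
    rewrite /lam /c !exX -expD; apply: exE.
    by rewrite -[t *+ a]mulr_natr -[(- _) *+ n]mulr_natr; ring.
  case: ifP => h; last by apply/ltW/expgt0.
  apply: ex_ge1; apply: mulr_ge0; rewrite /t; lra.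
have step2 : \sum_(y : B) lam ^+ #|[set i | x i == y i]| = (lam + 1) ^+ n.
  transitivity (\sum_(y : B) \prod_(i : 'I_n) (if x i == y i then lam else 1)).
    apply: eq_bigr => y _; rewrite -prodr_const big_mkcond /=.
    by apply: eq_bigr => i _; rewrite inE.
  rewrite -(bigA_distr_bigA (fun (i : 'I_n) (b : bool) => if x i == b then lam else 1)) /=.
  rewrite -[X in _ = _ ^+ X](card_ord n) -prodr_const; apply: eq_bigr => i _.
  rewrite big_bool /=; case: (x i) => /=; ring.
have step3 : (lam + 1) * c <= 2 * ex (- (xi ^+ 2)).
  have e1 : (lam + 1) * c = (ex xi + ex (- xi)) * ex (- (2 * xi ^+ 2)).
    rewrite mulrDl mul1r /lam /c -!expD mulrDl -expD.
    congr (_ + _); first by apply: exE; rewrite /t; field.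
    by rewrite -expD; apply: exE; rewrite /t; field.
  have e2 : 2 * ex (- (xi ^+ 2)) = 2 * ex (xi ^+ 2) * ex (- (2 * xi ^+ 2)).
    by rewrite -mulrA -expD; apply: congr1; apply: exE; ring.
  rewrite e1 e2; apply: ler_wpM2r; first exact/ltW/expgt0.
  apply: cosh_bound; lra.
apply: le_trans (ler_sum _ (fun y _ => step1 y)) _.
rewrite -mulr_suml step2 -exprMn -exprMn.
apply: lerXn2r; rewrite ?inE.
- by apply: mulr_ge0; lra.
- by apply: mulr_ge0; [lra | apply/ltW/expgt0].
- exact: step3.
Qed.
End Tail.
Lemma cheb (T : finType) (A : {set T}) (f : T -> R) (a c : R) : 0 <= c ->
  (#|[set F in A | c < `|f F - a|]|)%:R * c ^+ 2 <= \sum_(F in A) (f F - a) ^+ 2.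
Proof.
move=> c0; rewrite card_sub_sum natr_sum mulr_suml; apply: ler_sum => F _.
case h: (c < `|f F - a|) => /=; last by rewrite mul0r; apply: sqr_ge0.
rewrite mul1r -(real_normK (num_real (f F - a))).
have := normr_ge0 (f F - a); rewrite !expr2; nra.
Qed.

Lemma sum_sq (T : finType) (A : {set T}) (f : T -> R) (a : R) :
  \sum_(F in A) (f F - a) ^+ 2 =
  \sum_(F in A) f F ^+ 2 - 2 * a * \sum_(F in A) f F + a ^+ 2 * (#|A|)%:R.
Proof.
rewrite (eq_bigr (fun F => f F ^+ 2 + (- (2 * a) * f F + a ^+ 2))); last by move=> *; ring.
rewrite big_split big_split /= -mulr_sumr sumr_const -mulr_natr; ring.
Qed.

Lemma card_split (T : finType) (A : {set T}) (P : pred T) :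
  (#|[set c in A | P c]| + #|[set c in A | ~~ P c]|)%N = #|A|.
Proof.
rewrite !card_sub_sum -sum1_card -big_split /=; apply: eq_bigr => c _.
by case: (P c).
Qed.
Bind Scope ring_scope with R.
Lemma pow2_ge2 k : (0 < k)%N -> 2 <= (2 : R) ^+ k.
Proof.
case: k => // k _; rewrite exprS.
have : 1 <= (2 : R) ^+ k by apply: exprn_ege1; lra.
lra.
Qed.

Section Core.
Variables (n k m : nat) (xi : R).
Hypotheses (hk : (0 < k)%N) (hxi : 0 < xi < 1/2) (hC : (0 < 'C(n, k))%N).
Local Notation B := {ffun 'I_n -> bool}.
Local Notation V := (V n k).

Let Cn := 'C(n, k).
Let z : R := 2 ^+ k.
Let q : R := 1 - z^-1.
Let e : R := ((1 + 2 * xi) / 4) ^+ k.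
Let r : R := q ^+ 2 + e.
Let sat1 (x : B) := #|[set c in V | eval_clause c x]|.
Let sat2 (x y : B) := #|[set c in V | eval_clause c x && eval_clause c y]|.

Lemma z_ge2 : 2 <= z. Proof. exact: pow2_ge2. Qed.

Lemma NE : (#|V|)%:R = Cn%:R * z :> R.
Proof. by rewrite cardV natrM natrX. Qed.

Lemma q_ge : 1/2 <= q.
Proof.
have hz := z_ge2; rewrite /q.
have : z^-1 <= 2^-1.
  by rewrite lef_pV2 ?posrE //; lra.
lra.
Qed.

Lemma e_ge0 : 0 <= e.
Proof. by apply: exprn_ge0; case/andP: hxi => *; lra. Qed.

Lemma sat1_eq (x : B) : (sat1 x)%:R = (#|V|)%:R * q :> R.
Proof.
have h := card_split V (fun c => eval_clause c x); rewrite card_unsat in h.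
have -> : (sat1 x)%:R = (#|V|)%:R - Cn%:R :> R.
  by rewrite -h natrD addrK.
have hz := z_ge2; have hz0 : z != 0 by apply: lt0r_neq0; lra.
by rewrite NE /q; field.
Qed.

Lemma sat2_le1 (x y : B) : (sat2 x y <= sat1 x)%N.
Proof.
apply: subset_leq_card; apply/subsetP => c; rewrite !inE.
by case/andP => -> /andP[-> _].
Qed.

Lemma n_pos : (0 < n)%N.
Proof. by move: hC; rewrite bin_gt0; case: n => //; case: k hk. Qed.

Lemma sat2_good (x y : B) :
  (#|[set i | x i == y i]|)%:R <= (1/2 + xi) * n%:R -> (sat2 x y)%:R <= (#|V|)%:R * r.
Proof.
move=> ha; set a := #|[set i | x i == y i]| in ha.
have hid := @sat2_id n k x y; rewrite !card_unsat in hid.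
have hU := @card_unsat2 n k x y; rewrite -/a in hU.
have han : (a <= n)%N by have := max_card [set i | x i == y i]; rewrite card_ord.
have hb := bin_ineq k han.
set U2 := #|[set c in V | ~~ eval_clause c x && ~~ eval_clause c y]| in hid hU.
have e1 : (sat2 x y)%:R = (#|V|)%:R - 2 * Cn%:R + U2%:R :> R.
  have := congr1 (fun t : nat => t%:R : R) hid; rewrite !natrD /sat2 /=.
  rewrite /Cn; lra.
have nR : 0 < (n%:R : R) by rewrite ltr0n n_pos.
have hC2 : ('C(a, k))%:R <= Cn%:R * (1/2 + xi) ^+ k :> R.
  have hb' : ('C(a, k))%:R * n%:R ^+ k <= Cn%:R * a%:R ^+ k :> R.
    by rewrite -!natrX -!natrM ler_nat.
  have ha2 : (a%:R : R) ^+ k <= ((1/2 + xi) * n%:R) ^+ k.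
    have h0 : 0 <= (1/2 + xi) * n%:R by apply: mulr_ge0; [case/andP: hxi => *; lra | exact: ler0n].
    by apply: lerXn2r => //; rewrite nnegrE ler0n.
  rewrite exprMn in ha2.
  have nk : 0 < (n%:R : R) ^+ k by apply: exprn_gt0.
  rewrite -(ler_pM2r nk); apply: (le_trans hb'); rewrite -mulrA.
  by apply: ler_wpM2l; rewrite ?ler0n.
have hU' : (U2%:R : R) <= ('C(a, k))%:R by rewrite ler_nat.
have ez : e * z = (1/2 + xi) ^+ k.
  by rewrite /e /z -exprMn; congr (_ ^+ _); field.
have zq : z * q ^+ 2 = z - 2 + z^-1.
  have hz := z_ge2; have hz0 : z != 0 by apply: lt0r_neq0; lra.
  by rewrite /q; field.
have zi : 0 <= z^-1 by rewrite invr_ge0; have := z_ge2; lra.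
have C0 : 0 <= (Cn%:R : R) by rewrite ler0n.
rewrite e1 NE /r.
have -> : Cn%:R * z * (q ^+ 2 + e) = Cn%:R * (z * q ^+ 2) + Cn%:R * (e * z) by ring.
rewrite zq ez.
have : 0 <= Cn%:R * z^-1 :> R by apply: mulr_ge0.
have : Cn%:R * (z - 2 + z^-1) = Cn%:R * z - 2 * Cn%:R + Cn%:R * z^-1 :> R by ring.
lra.
Qed.

Lemma r_ge0 : 0 <= r.
Proof. by rewrite /r; have := e_ge0; have := sqr_ge0 q; lra. Qed.

Lemma q_ge0 : 0 <= q.
Proof. by have := q_ge; lra. Qed.

Lemma pair_bound (x y : B) :
  (sat2 x y)%:R ^+ m <= (#|V|)%:R ^+ m *
    (r ^+ m + (if (1/2 + xi) * n%:R < (#|[set i | x i == y i]|)%:R then 1 else 0) * q ^+ m).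
Proof.
have s0 : 0 <= ((sat2 x y)%:R : R) := ler0n _ _.
have N0 : 0 <= ((#|V|)%:R : R) := ler0n _ _.
have rm0 : 0 <= r ^+ m by apply: exprn_ge0; exact: r_ge0.
have qm0 : 0 <= q ^+ m by apply: exprn_ge0; exact: q_ge0.
have Nm0 : 0 <= (#|V|)%:R ^+ m :> R by apply: exprn_ge0.
case: ifP => h.
  have h1 : (sat2 x y)%:R <= (#|V|)%:R * q :> R.
    by rewrite -(sat1_eq x) ler_nat sat2_le1.
  have h2 : (sat2 x y)%:R ^+ m <= (#|V|)%:R ^+ m * q ^+ m :> R.
    rewrite -exprMn; apply: lerXn2r => //; rewrite nnegrE //.
    by apply: mulr_ge0 => //; exact: q_ge0.
  apply: (le_trans h2); apply: ler_wpM2l => //; lra.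
have ha : (#|[set i | x i == y i]|)%:R <= (1/2 + xi) * n%:R :> R by rewrite leNgt h.
have h1 := sat2_good ha.
have h2 : (sat2 x y)%:R ^+ m <= (#|V|)%:R ^+ m * r ^+ m :> R.
  rewrite -exprMn; apply: lerXn2r => //; rewrite nnegrE //.
  by apply: mulr_ge0 => //; exact: r_ge0.
apply: (le_trans h2); apply: ler_wpM2l => //; lra.
Qed.

Lemma inner_bound (x : B) :
  \sum_(y : B) (sat2 x y)%:R ^+ m <=
  2 ^+ n * ((#|V|)%:R ^+ m * (r ^+ m + q ^+ m * ex (- xi ^+ 2) ^+ n)).
Proof.
apply: le_trans (ler_sum _ (fun y _ => pair_bound x y)) _.
rewrite -mulr_sumr big_split /= sumr_const -mulr_suml.
have cB : (#|{ffun 'I_n -> bool}|)%:R = 2 ^+ n :> R.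
  by rewrite card_ffun card_bool card_ord natrX.
have cT : #|(xpredT : pred B)| = #|B| by apply: eq_card.
rewrite cT -[r ^+ m *+ _]mulr_natr cB.
have ht := tail x hxi.
have Nm0 : 0 <= (#|V|)%:R ^+ m :> R by apply: exprn_ge0.
have qm0 : 0 <= q ^+ m by apply: exprn_ge0; exact: q_ge0.
set X := \sum_(y : B) _ in ht *.
have -> : 2 ^+ n * ((#|V|)%:R ^+ m * (r ^+ m + q ^+ m * ex (- xi ^+ 2) ^+ n))
   = (#|V|)%:R ^+ m * (r ^+ m * 2 ^+ n + (2 ^+ n * ex (- xi ^+ 2) ^+ n) * q ^+ m) by ring.
apply: ler_wpM2l => //; rewrite lerD2l; exact: ler_wpM2r.
Qed.

Lemma core (zeta : R) : 0 < zeta ->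
  prob n k m (dev_event n m (q ^+ m) zeta) * (zeta ^+ 2 * (q ^+ m) ^+ 2)
  <= r ^+ m + q ^+ m * ex (- xi ^+ 2) ^+ n - (q ^+ m) ^+ 2.
Proof.
move=> hz.
set p := q ^+ m.
have p0 : 0 <= p by apply: exprn_ge0; exact: q_ge0.
set E := ex (- xi ^+ 2) ^+ n.
set T : R := 2 ^+ n.
have T0 : 0 < T by apply: exprn_gt0; lra.
set f := fun F : formula_t n m => (sF F)%:R / T.
have muE : forall F : formula_t n m, mu F = f F.
  by move=> F; rewrite /mu /f INRE RdivE RpowE.
have devE : forall F, dev_event n m p zeta F = (zeta * p < `|f F - p|).
  move=> F; rewrite /dev_event -muE; case: Rlt_dec => h.
    by apply/esym/RltP.
  by apply/esym/negbTE/RltP.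
have NV0 : (0 < #|V|)%N by rewrite cardV muln_gt0 hC expn_gt0.
set Sset := Sf n k m.
have probE : prob n k m (dev_event n m p zeta) =
   (#|[set F in Sset | zeta * p < `|f F - p|]|)%:R / (#|V|)%:R ^+ m.
  rewrite /prob !INRE RdivE; congr (_%:R / _).
    by apply: eq_card => F; rewrite !inE devE.
  by rewrite -natrX -(cardS n k m).
have hc := cheb Sset f p (mulr_ge0 (ltW hz) p0).
rewrite sum_sq in hc.
have cT : #|(xpredT : pred B)|%:R = T.
  by rewrite /T (eq_card (B := B)) // card_ffun card_bool card_ord natrX.
have s1 : \sum_(F in Sset) f F = (#|V|)%:R ^+ m * p.
  rewrite /f -mulr_suml -natr_sum sum_sF natr_sum.
  under eq_bigr => x _ do rewrite natrX (sat1_eq x) exprMn.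
  rewrite sumr_const -[_ *+ #|_|]mulr_natr cT /p; field; lra.
have s2 : \sum_(F in Sset) f F ^+ 2 <= (#|V|)%:R ^+ m * (r ^+ m + p * E).
  have -> : \sum_(F in Sset) f F ^+ 2 = (\sum_(F in Sset) sF F * sF F)%:R / T ^+ 2.
    rewrite natr_sum mulr_suml; apply: eq_bigr => F _.
    by rewrite /f expr_div_n natrM expr2.
  rewrite sum_sF2 natr_sum.
  under eq_bigr => x _ do rewrite natr_sum.
  under eq_bigr => x _ do under eq_bigr => y _ do rewrite natrX.
  rewrite ler_pdivrMr; last by apply: exprn_gt0.
  apply: le_trans (ler_sum _ (fun x _ => inner_bound x)) _.
  rewrite sumr_const -[_ *+ #|_|]mulr_natr cT -/T -/E -/p.
  by rewrite le_eqVlt; apply/orP; left; apply/eqP; ring.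
rewrite probE.
set D := (#|_|)%:R in hc *.
set M := (#|V|)%:R ^+ m in s1 s2 *.
have M0 : 0 < M by apply: exprn_gt0; rewrite ltr0n.
have cS : (#|Sset|)%:R = M by rewrite cardS natrX.
rewrite s1 cS exprMn in hc.
rewrite mulrAC ler_pdivrMr //.
set X2 := \sum_(F in Sset) f F ^+ 2 in hc s2.
have e1 : X2 - 2 * p * (M * p) + p ^+ 2 * M = X2 - M * p ^+ 2 by ring.
have e2 : (r ^+ m + p * E - p ^+ 2) * M = M * (r ^+ m + p * E) - M * p ^+ 2 by ring.
rewrite e1 in hc; rewrite e2; lra.
Qed.
End Core.
Lemma ex_le (a b : R) : a <= b -> ex a <= ex b.
Proof.
move=> h; have -> : ex b = ex a * ex (b - a) by rewrite -expD; apply: exE; ring.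
have := ex_ge1 (x := b - a) ltac:(lra); have := expgt0 a; nra.
Qed.

Lemma ex_small (y : R) : 0 <= y <= 1/2 -> ex y <= 1 + 2 * y.
Proof.
case/andP => y0 y1; have h := exp_up (y := y) ltac:(lra).
have h0 := expgt0 y; nra.
Qed.

Lemma bound_mc (n k m : nat) (xi zeta : R) : (0 < k)%N -> (0 < m)%N -> 0 < xi < 1/2 -> 0 < zeta ->
  prob n k m (dev_event n m ((1 - (2 ^+ k)^-1) ^+ m) zeta) * zeta ^+ 2 <=
  ex (4 * ((1 + 2 * xi) / 4) ^+ k * m%:R) - 1
    + ex (- xi ^+ 2) ^+ n / (1 - (2 ^+ k)^-1) ^+ m.
Proof.
move=> hk hm hxi hz.
set q := 1 - (2 ^+ k)^-1.
set e := ((1 + 2 * xi) / 4) ^+ k.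
have hq : 1/2 <= q.
  have hz2 := pow2_ge2 hk.
  have : (2 ^+ k)^-1 <= 2^-1 :> R by rewrite lef_pV2 ?posrE //; lra.
  rewrite /q; lra.
have e0 : 0 <= e by apply: exprn_ge0; case/andP: hxi => *; lra.
have p0 : 0 < q ^+ m by apply: exprn_gt0; lra.
have E0 : 0 <= ex (- xi ^+ 2) ^+ n by apply: exprn_ge0; exact/ltW/expgt0.
have em0 : 0 <= 4 * e * m%:R by apply: mulr_ge0; [lra | exact: ler0n].
have X1 : 1 <= ex (4 * e * m%:R) by apply: ex_ge1.
have X2 : 0 <= ex (- xi ^+ 2) ^+ n / q ^+ m by apply: divr_ge0 => //; exact: ltW.
have [C0|Cpos] := posnP 'C(n, k).
  have -> : prob n k m (dev_event n m (q ^+ m) zeta) = 0.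
    rewrite /prob.
    have -> : #|[set F : formula_t n m | valid_formula k F]| = 0%N.
      by rewrite -/(Sf n k m) cardS cardV C0 mul0n exp0n.
    by rewrite /= RdivE invr0 mulr0.
  rewrite mul0r; lra.
have hc := @core n k m xi hk hxi Cpos zeta hz.
rewrite -/q -/e in hc.
set p := q ^+ m in hc p0 X2 *.
set E := ex (- xi ^+ 2) ^+ n in hc E0 X2 *.
set X := ex (4 * e * m%:R) in X1 *.
have hr : (q ^+ 2 + e) ^+ m <= p ^+ 2 * X.
  have h1 : q ^+ 2 + e <= q ^+ 2 * (1 + 4 * e).
    have : 1/4 <= q ^+ 2 by rewrite expr2; nra.
    nra.
  have h2 : 1 + 4 * e <= ex (4 * e) by apply: expge.
  apply: (le_trans (y := (q ^+ 2 * ex (4 * e)) ^+ m)).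
    apply: lerXn2r; rewrite ?nnegrE.
    - by apply: addr_ge0 => //; exact: sqr_ge0.
    - by apply: mulr_ge0; [exact: sqr_ge0 | exact/ltW/expgt0].
    apply: (le_trans h1); apply: ler_wpM2l; [exact: sqr_ge0 | exact: h2].
  have -> : (q ^+ 2 * ex (4 * e)) ^+ m = p ^+ 2 * X.
    by rewrite exprMn /p -!exprM mulnC exX /X -[(4 * e) *+ m]mulr_natr.
  exact: lexx.
have pp : 0 < p ^+ 2 by apply: exprn_gt0.
rewrite -(ler_pM2r pp).
have -> : (X - 1 + E / p) * p ^+ 2 = p ^+ 2 * X - p ^+ 2 + p * E.
  by field; apply: lt0r_neq0.
rewrite -mulrA; lra.
Qed.
Lemma prob_ge0 n k m E : 0 <= prob n k m E.
Proof. by rewrite /prob !INRE RdivE; apply: divr_ge0; apply: ler0n. Qed.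

Lemma final_mc (k m : nat -> nat) (xi : nat -> R) (zeta : R) :
  (forall n, (0 < k n)%N) -> (forall n, (0 < m n)%N) -> (forall n, 0 < xi n < 1/2) ->
  0 < zeta ->
  (forall eps : R, 0 < eps -> exists N, forall n, (N <= n)%N ->
      ex (- xi n ^+ 2) ^+ n <= eps * (1 - (2 ^+ k n)^-1) ^+ m n) ->
  (forall eps : R, 0 < eps -> exists N, forall n, (N <= n)%N ->
      ((1 + 2 * xi n) / 4) ^+ k n * (m n)%:R <= eps) ->
  forall eps : R, 0 < eps -> exists N, forall n, (N <= n)%N ->
    `|prob n (k n) (m n) (dev_event n (m n) ((1 - (2 ^+ k n)^-1) ^+ m n) zeta)| < eps.
Proof.
move=> hk hm hxi hz H1 H2 eps heps.
have z2 : 0 < zeta ^+ 2 by apply: exprn_gt0.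
set ep := Num.min (1/8) (eps * zeta ^+ 2 / 18).
have ep0 : 0 < ep by rewrite lt_min; apply/andP; split; [lra | apply: divr_gt0 => //; apply: mulr_gt0].
have ep1 : ep <= 1/8 by rewrite ge_min lexx.
have ep2 : ep <= eps * zeta ^+ 2 / 18 by rewrite ge_min lexx orbT.
have [N1 HN1] := H1 ep ep0.
have [N2 HN2] := H2 ep ep0.
exists (maxn N1 N2) => n hn.
have hn1 : (N1 <= n)%N by apply: leq_trans hn; apply: leq_maxl.
have hn2 : (N2 <= n)%N by apply: leq_trans hn; apply: leq_maxr.
have hb := @bound_mc n (k n) (m n) (xi n) zeta (hk n) (hm n) (hxi n) hz.
set P := prob _ _ _ _ in hb *.
have P0 : 0 <= P by apply: prob_ge0.
rewrite ger0_norm //.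
set q := 1 - (2 ^+ k n)^-1 in hb HN1.
have q0 : 0 < q ^+ m n.
  apply: exprn_gt0; have := pow2_ge2 (hk n) => h2.
  have : (2 ^+ k n)^-1 <= 2^-1 :> R by rewrite lef_pV2 ?posrE //; lra.
  rewrite /q; lra.
have e1 := HN2 n hn2.
have e0 : 0 <= ((1 + 2 * xi n) / 4) ^+ k n * (m n)%:R.
  apply: mulr_ge0; last exact: ler0n.
  by apply: exprn_ge0; have := hxi n; case/andP => *; lra.
have ex1 : ex (4 * ((1 + 2 * xi n) / 4) ^+ k n * (m n)%:R) <= 1 + 8 * ep.
  rewrite -mulrA; apply: le_trans (ex_small _) _.
    by apply/andP; split; lra.
  lra.
have Ep : ex (- xi n ^+ 2) ^+ n / q ^+ m n <= ep.
  by rewrite ler_pdivrMr //; exact: HN1.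
have : P * zeta ^+ 2 <= eps / 2 * zeta ^+ 2.
  apply: (le_trans hb).
  have : eps / 2 * zeta ^+ 2 = 9 * (eps * zeta ^+ 2 / 18) by field.
  lra.
rewrite ler_pM2r // => hP; lra.
Qed.
Bind Scope R_scope with R.
Lemma eqE1 (x : R) (n : nat) : exp (Ropp (Rmult (pow x 2) (INR n))) = ex (- x ^+ 2) ^+ n.
Proof. by rewrite exX /ex RpowE INRE -[(- _) *+ n]mulr_natr mulNr. Qed.

Lemma eqE2 (k m : nat) : pow (Rminus 1 (Rinv (pow 2 k))) m = (1 - (2 ^+ k)^-1) ^+ m.
Proof. by rewrite !RpowE. Qed.

Lemma eqE3 (x : R) (k : nat) : pow (Rdiv (Rplus 1 (Rmult 2 x)) 4) k = ((1 + 2 * x) / 4) ^+ k.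
Proof. by rewrite RpowE RdivE !IZRposE !INRE. Qed.

Lemma eqE4 (m : nat) : Rinv (INR m) = (m%:R)^-1.
Proof. by rewrite INRE. Qed.
Lemma conv_xi (xi : nat -> R) :
  (forall n, Rlt 0 (xi n) /\ Rlt (xi n) (Rinv 2)) -> forall n, 0 < xi n < 1/2.
Proof.
move=> h n; case: (h n) => /RltP a /RltP b; apply/andP; split => //.
by rewrite mul1r.
Qed.

Lemma conv_lt (x y : R) : Rlt x y -> x < y.
Proof. by move/RltP. Qed.

Lemma conv_h1 (k m : nat -> nat) (xi : nat -> R) :
  little_o (fun n => exp (Ropp (Rmult (pow (xi n) 2) (INR n))))
           (fun n => pow (Rminus 1 (Rinv (pow 2 (k n)))) (m n)) ->
  (forall n, (0 < k n)%N) ->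
  forall eps : R, 0 < eps -> exists N, forall n, (N <= n)%N ->
      ex (- xi n ^+ 2) ^+ n <= eps * (1 - (2 ^+ k n)^-1) ^+ m n.
Proof.
move=> h hk eps heps; have heps' : Rlt 0 eps by apply/RltP.
have [N HN] := h eps heps'.
exists N => n hn; have := HN n hn; move/RleP.
rewrite !RabsE eqE1 eqE2 ger0_norm; last by apply: exprn_ge0; exact/ltW/expgt0.
rewrite ger0_norm //; apply: exprn_ge0.
have := pow2_ge2 (hk n) => h2.
have : (2 ^+ k n)^-1 <= 2^-1 :> R by rewrite lef_pV2 ?posrE //; lra.
lra.
Qed.

Lemma conv_h2 (k m : nat -> nat) (xi : nat -> R) :
  little_o (fun n => pow (Rdiv (Rplus 1 (Rmult 2 (xi n))) 4) (k n))
           (fun n => Rinv (INR (m n))) ->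
  (forall n, (0 < m n)%N) -> (forall n, 0 < xi n < 1/2) ->
  forall eps : R, 0 < eps -> exists N, forall n, (N <= n)%N ->
      ((1 + 2 * xi n) / 4) ^+ k n * (m n)%:R <= eps.
Proof.
move=> h hm hxi eps heps; have heps' : Rlt 0 eps by apply/RltP.
have [N HN] := h eps heps'.
exists N => n hn; have := HN n hn; move/RleP.
rewrite !RabsE eqE3 eqE4 ger0_norm; last first.
  by apply: exprn_ge0; have := hxi n; case/andP => *; lra.
have m0 : 0 < ((m n)%:R : R) by rewrite ltr0n.
rewrite ger0_norm; last by rewrite invr_ge0; exact: ltW.
by rewrite -ler_pdivlMr // => h'; apply: (le_trans h'); rewrite lexx.
Qed.

Lemma conv_goal (u : nat -> R) :
  (forall eps : R, 0 < eps -> exists N, forall n, (N <= n)%N -> `|u n| < eps) ->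
  Un_cv u 0.
Proof.
move=> H eps heps; have heps' : 0 < eps by apply/RltP.
have [N HN] := H eps heps'.
exists N => n hn; rewrite /R_dist; apply/RltP.
rewrite RminusE subr0 RabsE; apply: HN; exact/ssrnat.leP.
Qed.

Local Close Scope ring_scope.
Open Scope R_scope.

Theorem lemma3p2 (k m : nat -> nat) (xi : nat -> R)
  (hk : forall n, (0 < k n)%nat) (hm : forall n, (0 < m n)%nat)
  (hxi : forall n, 0 < xi n < / 2)
  (h1 : little_o (fun n => exp (- (xi n ^ 2 * INR n)))
                 (fun n => (1 - / 2 ^ k n) ^ m n))
  (h2 : little_o (fun n => ((1 + 2 * xi n) / 4) ^ k n)
                 (fun n => / INR (m n))) :
  forall zeta : R, 0 < zeta ->
    Un_cv (fun n => prob n (k n) (m n)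
                         (dev_event n (m n) ((1 - / 2 ^ k n) ^ m n) zeta)) 0.
Proof.
move=> zeta hz; apply: conv_goal => eps heps.
have hxi' := conv_xi hxi.
have [N HN] := final_mc hk hm hxi' (conv_lt hz) (conv_h1 h1 hk) (conv_h2 h2 hm hxi') heps.
by exists N => n hn; rewrite eqE2; exact: HN.
Qed.
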